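(* For every integer $L\geq 0$, \[ \sum_{j=-\infty}^{\infty} (-1)^j q^{j^2} \left(\frac{j+1}{3}\right) {2L+1 \brack L-j}_{q^2} = \frac{(q^3;q^6)_L}{(q;q^2)_L}. \]
   Context: For a variable $a$ and integer $n\ge 0$, $(a;q)_n=(1-a)(1-aq)\cdots(1-aq^{n-1})$ (with $(a;q)_0=1$). The $q$-binomial coefficient is ${A \brack B}_q=\frac{(q;q)_A}{(q;q)_B(q;q)_{A-B}}$ if $0\le B\le A$ are integers, and $0$ otherwise; ${A\brack B}_{q^2}$ is the same with $q$ replaced by $q^2$. $\left(\frac{j}{3}\right)$ is the Legendre symbol modulo 3: it equals $1$ if $j\equiv 1 \pmod 3$, $-1$ if $j\equiv -1\pmod 3$, and $0$ if $3\mid j$. *)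

(* Defs.v *)
From mathcomp Require Import all_boot all_order all_algebra.
Set Implicit Arguments. Unset Strict Implicit. Unset Printing Implicit Defensive.
Import Order.TTheory GRing.Theory Num.Theory.
Local Open Scope ring_scope.

Definition qpoch (R : nzRingType) (a q : R) (n : nat) : R :=
  \prod_(i < n) (1 - a * q ^+ i).

Definition qbinom (F : fieldType) (q : F) (A B : int) : F :=
  if (0 <= B) && (B <= A) then
    qpoch q q `|A|%N / (qpoch q q `|B|%N * qpoch q q `|A - B|%N)
  else 0.

Definition leg3 (j : int) : int :=
  if (j %% 3)%Z == 1 then 1 else if (j %% 3)%Z == 2 then -1 else 0.

Definition term25 (F : fieldType) (q : F) (L : nat) (j : int) : F :=
  (-1) ^+ `|j|%N * q ^+ (`|j| ^ 2)%N * (leg3 (j + 1))%:~R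
    * qbinom (q ^+ 2) (2 * L + 1)%N%:Z (L%:Z - j).

(* Main.v *)
Require Import Defs.
From mathcomp Require Import all_boot all_order all_algebra.
From mathcomp Require Import zify ring.
Import GRing.Theory Num.Theory.
Set Implicit Arguments. Unset Strict Implicit.
Local Open Scope ring_scope.

Lemma qpochS (F : fieldType) (p : F) n : qpoch p p n.+1 = qpoch p p n * (1 - p ^+ n.+1).
Proof. by rewrite /qpoch big_ord_recr /= exprS. Qed.

Lemma qpoch0 (F : fieldType) (p : F) : qpoch p p 0 = 1.
Proof. by rewrite /qpoch big_ord0. Qed.

Lemma qpoch_nz (F : fieldType) (p : F) (hp : forall m, (0 < m)%N -> p ^+ m != 1) n :
  qpoch p p n != 0.
Proof.
rewrite /qpoch; apply/prodf_neq0 => i _; rewrite -exprS subr_eq0 eq_sym; exact: hp.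
Qed.

Definition qb (F : fieldType) (p : F) (n k : nat) : F :=
  if (k <= n)%N then qpoch p p n / (qpoch p p k * qpoch p p (n - k)) else 0.

Definition qbx (F : fieldType) (p : F) (n : nat) (B : int) : F :=
  if B is Posz k then qb p n k else 0.

Lemma qbinomE (F : fieldType) (p : F) (n : nat) (B : int) :
  qbinom p n%:Z B = qbx p n B.
Proof.
case: B => [k|k]; rewrite /qbinom /qbx /qb //=.
rewrite lez_nat; case: leqP => // hk.
by have -> : absz (n%:Z - k%:Z) = (n - k)%N by lia.
Qed.

Section QB.
Variables (F : fieldType) (p : F) (hp : forall m, (0 < m)%N -> p ^+ m != 1).

Lemma qb_n0 n : qb p n 0 = 1.
Proof. by rewrite /qb leq0n qpoch0 mul1r subn0 divff // qpoch_nz. Qed.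

Lemma qb_gt n k : (n < k)%N -> qb p n k = 0.
Proof. by rewrite /qb ltnNge => /negbTE ->. Qed.

Lemma qb_nn n : qb p n n = 1.
Proof. by rewrite /qb leqnn subnn qpoch0 mulr1 divff // qpoch_nz. Qed.

Lemma pnz m : (0 < m)%N -> 1 - p ^+ m != 0.
Proof. by move=> hm; rewrite subr_eq0 eq_sym hp. Qed.

Lemma pascalA n k : qb p n.+1 k.+1 = qb p n k + p ^+ k.+1 * qb p n k.+1.
Proof.
case: (ltngtP k n) => hk.
- rewrite /qb ltnS ltnW // hk subSS.
  have hm := subnSK hk; set m := (n - k.+1)%N in hm *.
  rewrite -hm !qpochS.
  have -> : p ^+ n.+1 = p ^+ k.+1 * p ^+ m.+1 by rewrite -exprD; congr (_ ^+ _); lia.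
  have h1 := pnz (ltn0Sn k). have h2 := pnz (ltn0Sn m).
  have h3 := qpoch_nz hp k. have h4 := qpoch_nz hp m. 
  field. by rewrite h3 h4 h1 h2.
- rewrite qb_gt // qb_gt // qb_gt ?mulr0 ?addr0 //; lia.
- by rewrite hk !qb_nn qb_gt // mulr0 addr0.
Qed.

Lemma pascalB n k : qb p n.+1 k.+1 = p ^+ (n - k) * qb p n k + qb p n k.+1.
Proof.
case: (ltngtP k n) => hk.
- rewrite /qb ltnS ltnW // hk subSS.
  have hm := subnSK hk; set m := (n - k.+1)%N in hm *.
  rewrite -hm !qpochS.
  have -> : p ^+ n.+1 = p ^+ k.+1 * p ^+ m.+1 by rewrite -exprD; congr (_ ^+ _); lia.
  have h1 := pnz (ltn0Sn k). have h2 := pnz (ltn0Sn m).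
  have h3 := qpoch_nz hp k. have h4 := qpoch_nz hp m. 
  field. by rewrite h3 h4 h1 h2.
- rewrite qb_gt // qb_gt // qb_gt ?mulr0 ?addr0 //; lia.
- by rewrite hk !qb_nn qb_gt // subnn expr0 mulr1 addr0.
Qed.

Lemma pascal1 n : qb p n.+2 1 = (1 + p ^+ n.+1) * qb p n 0 + p * qb p n 1.
Proof.
rewrite pascalA pascalB !qb_n0 subn0 ?exprS ?expr0; ring.
Qed.

Lemma pascal2 n k : qb p n.+2 k.+2 =
  p ^+ (n - k) * qb p n k + (1 + p ^+ n.+1) * qb p n k.+1 + p ^+ k.+2 * qb p n k.+2.
Proof.
rewrite pascalA pascalB pascalB.
case: (leqP k.+1 n) => hk.
- have -> : p ^+ n.+1 = p ^+ k.+2 * p ^+ (n - k.+1) by rewrite -exprD; congr (_ ^+ _); lia.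
  rewrite ?exprS; ring.
- rewrite (qb_gt hk) ?exprS; ring.
Qed.
End QB.
Definition g (F : fieldType) (q : F) (L : nat) (j : int) : F :=
  (-1) ^+ `|j|%N * q ^+ (`|j| ^ 2)%N * qbinom (q ^+ 2) (2 * L + 1)%N%:Z (L%:Z - j).

Lemma gE (F : fieldType) (q : F) L j :
  g q L j = (-1) ^+ `|j|%N * q ^+ (`|j| ^ 2)%N * qbx (q ^+ 2) (2 * L + 1)%N (L%:Z - j).
Proof. by rewrite /g qbinomE. Qed.

Lemma qbxP (F : fieldType) (p : F) n k : qbx p n (Posz k) = qb p n k.
Proof. by []. Qed.

Lemma qbx_neg (F : fieldType) (p : F) n B : B < 0 -> qbx p n B = 0.
Proof. by case: B. Qed.

Lemma sgnS (F : fieldType) (j : int) : (-1) ^+ absz (j + 1)%R = - (-1) ^+ `|j|%N :> F.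
Proof.
have [h|h] : (absz (j + 1)%R = (absz j).+1 \/ absz j = (absz (j + 1)%R).+1)%N by lia.
- by rewrite h exprS mulN1r.
- by rewrite h exprS mulN1r opprK.
Qed.

Lemma sgnP (F : fieldType) (j : int) : (-1) ^+ absz (j - 1)%R = - (-1) ^+ `|j|%N :> F.
Proof. by rewrite -{2}(subrK 1 j) sgnS opprK. Qed.

Lemma alg0 (F : fieldType) (s Q Q' Q'' D E G : F) : E * Q' = Q ->
  s * Q * 1 = (1 + D) * (s * Q * 0) - E * ((- s) * Q' * 1) - G * ((- s) * Q'' * 0).
Proof.
move=> h; have -> : E * ((- s) * Q' * 1) = - (s * (E * Q')) by ring.
rewrite h; ring.
Qed.

Lemma alg1 (F : fieldType) (s Q Q' Q'' B C D E G y z : F) : D = B -> E * Q' = Q * C ->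
  s * Q * ((1 + B) * y + C * z) = (1 + D) * (s * Q * y) - E * ((- s) * Q' * z) - G * ((- s) * Q'' * 0).
Proof.
move=> -> h; have -> : E * ((- s) * Q' * z) = - (s * z * (E * Q')) by ring.
rewrite h; ring.
Qed.

Lemma alg2 (F : fieldType) (s Q Q' Q'' A B C D E G x y z : F) : D = B -> E * Q' = Q * C ->
  (G * Q'' = Q * A \/ x = 0) ->
  s * Q * (A * x + (1 + B) * y + C * z) = (1 + D) * (s * Q * y) - E * ((- s) * Q' * z) - G * ((- s) * Q'' * x).
Proof.
move=> -> h [h'|->].
- have -> : E * ((- s) * Q' * z) = - (s * z * (E * Q')) by ring.
  have -> : G * ((- s) * Q'' * x) = - (s * x * (G * Q'')) by ring.
  rewrite h h'; ring.
- have -> : E * ((- s) * Q' * z) = - (s * z * (E * Q')) by ring.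
  rewrite h; ring.
Qed.

Lemma term_rec (F : fieldType) (q : F) (hq : forall n : nat, (0 < n)%N -> q ^+ n != 1) L j :
  g q L.+1 j = (1 + q ^+ (4 * L + 4)) * g q L j - q ^+ (2 * L + 1) * g q L (j - 1)
               - q ^+ (2 * L + 3) * g q L (j + 1).
Proof.
have hp : forall m, (0 < m)%N -> (q ^+ 2) ^+ m != 1.
  by move=> m hm; rewrite -exprM; apply: hq; rewrite muln_gt0.
have [t ->] : exists t, j = L%:Z + 1 - t by exists (L%:Z + 1 - j); lia.
rewrite !gE.
have -> : L.+1%:Z - (L%:Z + 1 - t) = t by lia.
have -> : L%:Z - (L%:Z + 1 - t) = t - 1 by lia.
have -> : L%:Z - (L%:Z + 1 - t - 1) = t by lia.
have -> : L%:Z - (L%:Z + 1 - t + 1) = t - 2 by lia.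
have -> : (2 * L.+1 + 1 = (2 * L + 1).+2)%N by lia.
rewrite (sgnP _ (L%:Z + 1 - t)) (sgnS _ (L%:Z + 1 - t)).
have hD : q ^+ (4 * L + 4) = (q ^+ 2) ^+ (2 * L + 1).+1.
  by rewrite -exprM; congr (_ ^+ _); lia.
case: t => [[|[|k]]|k].
- rewrite [qbx _ _ (Posz 0 - 1)]qbx_neg // [qbx _ _ (Posz 0 - 2)]qbx_neg // !qbxP !qb_n0 //; apply: alg0.
  by rewrite -exprD; congr (_ ^+ _); lia.
- have -> : Posz 1 - 1 = 0 by [].
  rewrite [qbx _ _ (Posz 1 - 2)]qbx_neg // !qbxP pascal1 //.
  apply: alg1; first exact: hD.
  by rewrite -!exprD; congr (_ ^+ _); lia.
- have -> : Posz k.+2 - 1 = Posz k.+1 by lia.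
  have -> : Posz k.+2 - 2 = Posz k by lia.
  rewrite !qbxP pascal2 //.
  apply: alg2; first exact: hD.
    by rewrite -exprM -!exprD; congr (_ ^+ _); lia.
  case: (leqP k (2 * L + 1)) => hk.
    by left; rewrite -exprM -!exprD; congr (_ ^+ _); lia.
  by right; rewrite qb_gt.
- rewrite [qbx _ _ (Negz k)]qbx_neg // [qbx _ _ (Negz k - 1)]qbx_neg // [qbx _ _ (Negz k - 2)]qbx_neg // !mulr0 !subr0 // ; lia.
Qed.

Definition Sm (F : fieldType) (K : nat) (f : int -> F) : F :=
  \sum_(i < (2 * K + 1)%N) f (i%:Z - K%:Z).

Lemma Sm_ext (F : fieldType) K (f h : int -> F) : (forall j, f j = h j) -> Sm K f = Sm K h.
Proof. by move=> e; apply: eq_bigr => i _; rewrite e. Qed.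

Lemma Sm_lin (F : fieldType) K (f u v : int -> F) a b :
  Sm K (fun j => f j * (a * u j + b * v j)) =
  a * Sm K (fun j => f j * u j) + b * Sm K (fun j => f j * v j).
Proof.
rewrite /Sm !mulr_sumr -big_split /=; apply: eq_bigr => i _; ring.
Qed.

Lemma Sm_shift (F : fieldType) K (f : int -> F) :
  f (- K%:Z) = 0 -> f (K%:Z + 1) = 0 -> Sm K (fun j => f (j + 1)) = Sm K f.
Proof.
move=> h0 h1.
have e1 : \sum_(i < (2 * K + 1).+1) f (i%:Z - K%:Z) = f (- K%:Z) + Sm K (fun j => f (j + 1)).
  rewrite big_ord_recl; congr (_ + _); first by congr f; rewrite /=; lia.
  apply: eq_bigr => i _; rewrite lift0; congr f; lia.
have e2 : \sum_(i < (2 * K + 1).+1) f (i%:Z - K%:Z) = Sm K f + f (K%:Z + 1).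
  rewrite big_ord_recr; congr (_ + _); congr f; rewrite /=; lia.
by move: e1; rewrite e2 h0 h1 add0r addr0 => ->.
Qed.

Lemma Sm_grow (F : fieldType) K (f : int -> F) :
  f (- K%:Z - 1) = 0 -> f (K%:Z + 1) = 0 -> Sm K.+1 f = Sm K f.
Proof.
move=> h0 h1; rewrite /Sm.
have -> : (2 * K.+1 + 1 = (2 * K + 1).+1.+1)%N by lia.
rewrite big_ord_recl big_ord_recr /=.
rewrite [f (_ - _)](_ : _ = 0); last by rewrite -h0; congr f; lia.
rewrite [f (Posz (2 * K + 1).+1 - _)](_ : _ = 0); last by rewrite -h1; congr f; lia.
rewrite add0r addr0; apply: eq_bigr => i _; congr f; rewrite /= /bump /=; lia.
Qed.

Definition cc (n : int) : int :=
  if (n %% 3)%Z == 0 then 1 else if (n %% 3)%Z == 2 then -1 else 0.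

Lemma leg3S n : leg3 (n + 1) = cc n - leg3 n /\ cc (n + 1) = - leg3 n.
Proof.
rewrite /leg3 /cc.
have [h|[h|h]] : ((n %% 3 = 0) \/ (n %% 3 = 1) \/ (n %% 3 = 2))%Z by lia.
- have h' : ((n + 1) %% 3 = 1)%Z by lia. by rewrite h h'.
- have h' : ((n + 1) %% 3 = 2)%Z by lia. by rewrite h h'.
- have h' : ((n + 1) %% 3 = 0)%Z by lia. by rewrite h h'.
Qed.

Definition DW (F : fieldType) (n : int) : F := (leg3 n)%:~R.
Definition CW (F : fieldType) (n : int) : F := (cc n)%:~R.

Lemma DWS (F : fieldType) n : DW F (n + 1) = CW F n - DW F n.
Proof. by rewrite /DW /CW (leg3S n).1 intrB. Qed.
Lemma CWS (F : fieldType) n : CW F (n + 1) = - DW F n.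
Proof. by rewrite /DW /CW (leg3S n).2 intrN. Qed.

Lemma g_out (F : fieldType) (q : F) L j : (j < - L%:Z - 1) || (L%:Z < j) -> g q L j = 0.
Proof.
move=> h; rewrite /g /qbinom ifF ?mulr0 //; apply/negbTE; lia.
Qed.

Definition RR (F : fieldType) (q : F) (L : nat) : F :=
  qpoch (q ^+ 3) (q ^+ 6) L / qpoch q (q ^+ 2) L.

Lemma qpochS' (F : fieldType) (x y : F) n : qpoch x y n.+1 = qpoch x y n * (1 - x * y ^+ n).
Proof. by rewrite /qpoch big_ord_recr. Qed.

Lemma RRS (F : fieldType) (q : F) (hq : forall n : nat, (0 < n)%N -> q ^+ n != 1) L :
  RR q L.+1 = RR q L * (1 + q ^+ (2 * L + 1) + q ^+ (2 * L + 1) * q ^+ (2 * L + 1)).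
Proof.
rewrite /RR !qpochS'.
set a := q ^+ (2 * L + 1).
have e1 : q ^+ 3 * (q ^+ 6) ^+ L = a * a * a.
  by rewrite /a -!exprD -!exprM -exprD; congr (_ ^+ _); lia.
have e2 : q * (q ^+ 2) ^+ L = a.
  by rewrite /a -exprM -exprS; congr (_ ^+ _); lia.
rewrite e1 e2.
have ha : 1 - a != 0 by rewrite subr_eq0 eq_sym hq // addn1.
have hP : qpoch q (q ^+ 2) L != 0.
  rewrite /qpoch; apply/prodf_neq0 => i _; rewrite subr_eq0 eq_sym -exprM -exprS hq //.
field. by rewrite hP ha.
Qed.

Lemma Sm_indep (F : fieldType) L (f : int -> F) :
  (forall j, (j < - L%:Z - 1) || (L%:Z < j) -> f j = 0) ->
  forall K, (L < K)%N -> Sm K f = Sm L.+1 f.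
Proof.
move=> hf; elim=> [//|K IH] hK.
case: (ltngtP L K) => h.
- rewrite Sm_grow ?IH //; apply: hf; lia.
- lia.
- by rewrite h.
Qed.

Lemma main (F : fieldType) (q : F) (hq : forall n : nat, (0 < n)%N -> q ^+ n != 1) L :
  forall K, (L < K)%N ->
  Sm K (fun j => g q L j * DW F (j + 1)) = RR q L /\
  Sm K (fun j => g q L j * CW F (j + 1)) = - q ^+ (2 * L + 1) * RR q L.
Proof.
have hp : forall m, (0 < m)%N -> (q ^+ 2) ^+ m != 1.
  by move=> m hm; rewrite -exprM; apply: hq; rewrite muln_gt0.
elim: L => [|L IH] K hK.
- rewrite !(@Sm_indep F 0 _ _ K hK); last first.
    by move=> j hj; rewrite g_out ?mul0r.
    by move=> j hj; rewrite g_out ?mul0r.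
  rewrite /Sm !big_ord_recr big_ord0 /=.
  have g0 : g q 0 (Posz 0 - 1) = - q.
    rewrite gE /=; change ((-1) ^+ 1 * q ^+ 1 * qb (q ^+ 2) 1 1 = - q).
    by rewrite qb_nn // expr1 expr1 mulN1r mulr1.
  have g1 : g q 0 (Posz 1 - 1) = 1.
    rewrite gE /=; change ((-1) ^+ 0 * q ^+ 0 * qb (q ^+ 2) 1 0 = 1).
    by rewrite qb_n0 // !expr0 !mulr1.
  have g2 : g q 0 (Posz 2 - 1) = 0 by rewrite g_out.
  rewrite g0 g1 g2 /RR /qpoch !big_ord0 divr1 /DW /CW /=.
  split.
  + have -> : leg3 (Posz 0 - 1 + 1) = 0 by [].
    have -> : leg3 (Posz 1 - 1 + 1) = 1 by [].
    rewrite mulr0 mul0r !add0r mul1r addr0 //.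
  + have -> : cc (Posz 0 - 1 + 1) = 1 by [].
    have -> : cc (Posz 1 - 1 + 1) = 0 by [].
    by rewrite mul0r mulr0 !addr0 add0r expr1 mulr1.
- have hK' : (L < K)%N by lia.
  have [hD hC] := IH K hK'.
  set Dn := Sm K (fun j => g q L j * DW F (j + 1)) in hD *.
  set Cn := Sm K (fun j => g q L j * CW F (j + 1)) in hC *.
  set a := q ^+ (2 * L + 1) in hC *.
  have E1 e : Sm K (fun j => g q L.+1 j * e j) =
      (1 + q ^+ (4 * L + 4)) * Sm K (fun j => g q L j * e j)
      - a * Sm K (fun j => g q L (j - 1) * e j)
      - q ^+ (2 * L + 3) * Sm K (fun j => g q L (j + 1) * e j).
    rewrite /Sm !mulr_sumr -!sumrB; apply: eq_bigr => i _; rewrite term_rec // -/a; set b := q ^+ (2 * L + 3); set c := q ^+ (4 * L + 4); ring.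
  have E2 e : Sm K (fun j => g q L (j - 1) * e j) = Sm K (fun j => g q L j * e (j + 1)).
    rewrite -(Sm_shift (f := fun j => g q L (j - 1) * e j)).
    - by apply: Sm_ext => j; rewrite addrK.
    - by rewrite g_out ?mul0r //; lia.
    - by rewrite g_out ?mul0r //; lia.
  have E3 e : Sm K (fun j => g q L (j + 1) * e j) = Sm K (fun j => g q L j * e (j - 1)).
    rewrite -(Sm_shift (f := fun j => g q L j * e (j - 1))).
    - by apply: Sm_ext => j; rewrite addrK.
    - by rewrite g_out ?mul0r //; lia.
    - by rewrite g_out ?mul0r //; lia.
  have SD2 : Sm K (fun j => g q L j * DW F (j + 1 + 1)) = Cn - Dn.
    rewrite (@Sm_ext _ _ _ (fun j => g q L j * (1 * CW F (j + 1) + (-1) * DW F (j + 1)))).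
      by rewrite Sm_lin -/Dn -/Cn; ring.
    by move=> j; rewrite DWS; ring.
  have SD0 : Sm K (fun j => g q L j * DW F (j - 1 + 1)) = - Cn.
    rewrite (@Sm_ext _ _ _ (fun j => g q L j * ((-1) * CW F (j + 1) + 0 * DW F (j + 1)))).
      by rewrite Sm_lin -/Dn -/Cn; ring.
    by move=> j; rewrite subrK CWS; ring.
  have SC2 : Sm K (fun j => g q L j * CW F (j + 1 + 1)) = - Dn.
    rewrite (@Sm_ext _ _ _ (fun j => g q L j * (0 * CW F (j + 1) + (-1) * DW F (j + 1)))).
      by rewrite Sm_lin -/Dn -/Cn; ring.
    by move=> j; rewrite CWS; ring.
  have SC0 : Sm K (fun j => g q L j * CW F (j - 1 + 1)) = Dn - Cn.
    rewrite (@Sm_ext _ _ _ (fun j => g q L j * ((-1) * CW F (j + 1) + 1 * DW F (j + 1)))).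
      by rewrite Sm_lin -/Dn -/Cn; ring.
    move=> j; rewrite subrK.
    have h1 := DWS F j. have h2 := CWS F j.
    have -> : CW F j = DW F (j + 1) + DW F j by rewrite h1; ring.
    rewrite h2; ring.
  have eb : q ^+ (2 * L + 3) = a * q * q.
    by rewrite /a -!exprSr; congr (_ ^+ _); lia.
  have eab : q ^+ (4 * L + 4) = a * a * q * q.
    by rewrite /a -exprD -!exprSr; congr (_ ^+ _); lia.
  have ea' : q ^+ (2 * L.+1 + 1) = a * q * q.
    by rewrite /a -!exprSr; congr (_ ^+ _); lia.
  rewrite (RRS hq) -/a !E1 !E2 !E3 SD2 SD0 SC2 SC0 /= -/Dn -/Cn hD hC eb eab ea'.
  split; ring.
Qed.

Theorem theorem2p5 (F : fieldType) (q : F)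
    (hq : forall n : nat, (0 < n)%N -> q ^+ n != 1)
    (L N : nat) (hN : (L < N)%N) :
  \sum_(i < (2 * N + 1)%N) term25 q L (i%:Z - N%:Z)
  = qpoch (q ^+ 3) (q ^+ 6) L / qpoch q (q ^+ 2) L.
Proof.
rewrite -[RHS]/(RR q L) -(main hq hN).1.
by apply: eq_bigr => i _; rewrite /term25 /g /DW mulrAC.
Qed.
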